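(* Let $N\ge2$, $0<\varepsilon<\pi/2$ and $0<\eta<\min\{\pi/4,\varepsilon/2\}$. For $\lambda\in\Sigma_\varepsilon$ and $\xi'\in\tilde\Sigma_\eta^{N-1}$ let $A=\sqrt{\sum_{j=1}^{N-1}\xi_j^2}$, $B=\sqrt{\lambda+A^2}$ (square roots with positive real part), $\tilde A=\sqrt{\sum_{j=1}^{N-1}|\xi_j|^2}$, and $D(A,B)=B^3+AB^2+3A^2B-A^3$. Then there exists a positive constant $c$ such that \[ c(|\lambda|^{1/2}+\tilde A)^3\le|D(A,B)|\qquad(\lambda\in\Sigma_\varepsilon,\ \xi'\in\tilde\Sigma_\eta^{N-1}). \]
   Context: $\Sigma_\varepsilon=\{\lambda\in\mathbb{C}\setminus\{0\}:|\arg\lambda|<\pi-\varepsilon\}$; $\tilde\Sigma_\eta=\{z\in\mathbb{C}\setminus\{0\}:|\arg z|<\eta\}\cup\{z\in\mathbb{C}\setminus\{0\}:\pi-\eta<|\arg z|\}$, and $\tilde\Sigma_\eta^{N-1}$ is its $(N-1)$-fold product. *)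

(* Defs.v *)
From Stdlib Require Export Reals.
From Coquelicot Require Export Coquelicot.
Open Scope R_scope.

Definition has_arg (z : C) (theta : R) : Prop :=
  exists r : R, 0 < r /\ z = (r * cos theta, r * sin theta)%R.

Definition in_Sigma (eps : R) (z : C) : Prop :=
  z <> 0%C /\ exists theta, -PI < theta <= PI /\ has_arg z theta /\ Rabs theta < PI - eps.

Definition in_tSigma (eta : R) (z : C) : Prop :=
  z <> 0%C /\ exists theta, -PI < theta <= PI /\ has_arg z theta /\
    (Rabs theta < eta \/ PI - eta < Rabs theta).

Definition is_psqrt (w z : C) : Prop := (w * w)%C = z /\ 0 < Re w.

Definition Dpoly (A B : C) : C :=
  (B * B * B + A * (B * B) + 3 * (A * A) * B - A * A * A)%C.

(* Main.v *)
Require Import Defs.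
Module MC.
From HB Require Import structures.
From mathcomp Require Import all_boot all_order all_algebra.
From mathcomp Require Import all_classical all_reals all_analysis.
From mathcomp Require Import Rstruct.
Import Order.TTheory GRing.Theory Num.Theory.
Import numFieldNormedType.Exports.
Local Open Scope classical_set_scope.
Local Open Scope ring_scope.

Section Gen.
Variable R : realType.
Notation Q := ((R * R) * (R * R))%type.
Implicit Types f g : Q -> R.

Definition cre (x1 y1 x2 y2 : R) := x1 * x2 - y1 * y2.
Definition cim (x1 y1 x2 y2 : R) := x1 * y2 + y1 * x2.
Definition CT (x : Q) (f : Q -> R) := {for x, continuous f}.
Lemma toCT x f : CT x f -> {for x, continuous f}. Proof. by []. Qed.
Section C.
Variable x : Q.
Lemma c11 : CT x (fun x : Q => x.1.1).
Proof. apply: cvg_comp; [exact: cvg_fst| exact: cvg_fst]. Qed.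
Lemma c12 : CT x (fun x : Q => x.1.2).
Proof. apply: cvg_comp; [exact: cvg_fst| exact: cvg_snd]. Qed.
Lemma c21 : CT x (fun x : Q => x.2.1).
Proof. apply: cvg_comp; [exact: cvg_snd| exact: cvg_fst]. Qed.
Lemma c22 : CT x (fun x : Q => x.2.2).
Proof. apply: cvg_comp; [exact: cvg_snd| exact: cvg_snd]. Qed.
Lemma cD f g : CT x f -> CT x g -> CT x (fun y => f y + g y).
Proof. exact: continuousD. Qed.
Lemma cM f g : CT x f -> CT x g -> CT x (fun y => f y * g y).
Proof. exact: continuousM. Qed.
Lemma cO f : CT x f -> CT x (fun y => - f y).
Proof. exact: continuousN. Qed.
Lemma cC (c : R) : CT x (fun y : Q => c).
Proof. exact: cvg_cst. Qed.
Lemma cN f : CT x f -> CT x (fun y => `|f y|).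
Proof. move=> h. apply: cvg_comp h _. exact: norm_continuous. Qed.
End C.


Lemma ccre x (f1 f2 f3 f4 : Q -> R) : CT x f1 -> CT x f2 -> CT x f3 -> CT x f4 -> CT x (fun y => cre (f1 y) (f2 y) (f3 y) (f4 y)).
Proof. move=> h1 h2 h3 h4; rewrite /cre. exact: (@cD x _ _ (@cM x _ _ h1 h3) (@cO x _ (@cM x _ _ h2 h4))). Qed.
Lemma ccim x (f1 f2 f3 f4 : Q -> R) : CT x f1 -> CT x f2 -> CT x f3 -> CT x f4 -> CT x (fun y => cim (f1 y) (f2 y) (f3 y) (f4 y)).
Proof. move=> h1 h2 h3 h4; rewrite /cim. exact: (@cD x _ _ (@cM x _ _ h1 h4) (@cM x _ _ h2 h3)). Qed.

Ltac cont := repeat match goal with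
 | |- CT _ (fun y => cre (@?f1 y) (@?f2 y) (@?f3 y) (@?f4 y)) => refine (ccre _ f1 f2 f3 f4 _ _ _ _)
 | |- CT _ (fun y => cim (@?f1 y) (@?f2 y) (@?f3 y) (@?f4 y)) => refine (ccim _ f1 f2 f3 f4 _ _ _ _)
 | |- CT _ (fun y => (@?f y) + (@?g y)) => refine (cD _ f g _ _)
 | |- CT _ (fun y => (@?f y) * (@?g y)) => refine (cM _ f g _ _)
 | |- CT _ (fun y => - (@?f y)) => refine (cO _ f _)
 | |- CT _ (fun y => `|@?f y|) => refine (cN _ f _)
 | |- CT _ (fun y => y.1.1) => exact: c11
 | |- CT _ (fun y => y.1.2) => exact: c12
 | |- CT _ (fun y => y.2.1) => exact: c21
 | |- CT _ (fun y => y.2.2) => exact: c22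
 | |- CT _ (fun y => _) => exact: cC
 end.

Definition Dre (a b p q : R) :=
  cre (cre p q p q) (cim p q p q) p q + cre a b (cre p q p q) (cim p q p q)
  + cre ((1+1+1) * cre a b a b) ((1+1+1) * cim a b a b) p q
  - cre (cre a b a b) (cim a b a b) a b.
Definition Dim (a b p q : R) :=
  cim (cre p q p q) (cim p q p q) p q + cim a b (cre p q p q) (cim p q p q)
  + cim ((1+1+1) * cre a b a b) ((1+1+1) * cim a b a b) p q
  - cim (cre a b a b) (cim a b a b) a b.
Definition Fg (a b p q : R) := Dre a b p q * Dre a b p q + Dim a b p q * Dim a b p q.
Definition g3 (T a b : R) := T * (a * a - b * b) - (a * b + a * b).
Definition g4 (T a b : R) := T * (a * a - b * b) + (a * b + a * b).
Definition g5 (sg kp a b p q : R) := sg * (p * p - q * q - a * a + b * b) + kp * Num.norm (p * q - a * b + (p * q - a * b)).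
Definition nrm (a b p q : R) := a * a + b * b + p * p + q * q.

Definition Kset (T sg kp : R) : set Q :=
  ((`[-1, 1] `*` `[-1, 1]) `*` (`[-1, 1] `*` `[-1, 1]))
  `&` ((fun x : Q => x.1.1) @^-1` [set y | 0 <= y])
  `&` ((fun x : Q => x.2.1) @^-1` [set y | 0 <= y])
  `&` ((fun x : Q => g3 T x.1.1 x.1.2) @^-1` [set y | 0 <= y])
  `&` ((fun x : Q => g4 T x.1.1 x.1.2) @^-1` [set y | 0 <= y])
  `&` ((fun x : Q => g5 sg kp x.1.1 x.1.2 x.2.1 x.2.2) @^-1` [set y | 0 <= y])
  `&` ((fun x : Q => nrm x.1.1 x.1.2 x.2.1 x.2.2) @^-1` [set y | y <= 1])
  `&` ((fun x : Q => nrm x.1.1 x.1.2 x.2.1 x.2.2) @^-1` [set y | 1 <= y]).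

Lemma Kcompact T sg kp : compact (Kset T sg kp).
Proof.
rewrite /Kset.
apply: (@compact_closedI Q); last first.
  apply: preimage_closed; [move=> x _; unfold g3, g4, g5, nrm; apply: toCT; cont | first [exact: closed_ge | exact: closed_le]].
apply: (@compact_closedI Q); last first.
  apply: preimage_closed; [move=> x _; unfold g3, g4, g5, nrm; apply: toCT; cont | first [exact: closed_ge | exact: closed_le]].
apply: (@compact_closedI Q); last first.
  apply: preimage_closed; [move=> x _; unfold g3, g4, g5, nrm; apply: toCT; cont | first [exact: closed_ge | exact: closed_le]].
apply: (@compact_closedI Q); last first.
  apply: preimage_closed; [move=> x _; unfold g3, g4, g5, nrm; apply: toCT; cont | first [exact: closed_ge | exact: closed_le]].
apply: (@compact_closedI Q); last first.
  apply: preimage_closed; [move=> x _; unfold g3, g4, g5, nrm; apply: toCT; cont | first [exact: closed_ge | exact: closed_le]].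
apply: (@compact_closedI Q); last first.
  apply: preimage_closed; [move=> x _; unfold g3, g4, g5, nrm; apply: toCT; cont | first [exact: closed_ge | exact: closed_le]].
apply: (@compact_closedI Q); last first.
  apply: preimage_closed; [move=> x _; unfold g3, g4, g5, nrm; apply: toCT; cont | first [exact: closed_ge | exact: closed_le]].
have h := @segment_compact R (-1) 1. exact: (compact_setX (compact_setX h h) (compact_setX h h)).
Qed.

Lemma evt_main (T sg kp : R) :
  Kset T sg kp !=set0 ->
  (forall x, Kset T sg kp x -> 0 < Fg x.1.1 x.1.2 x.2.1 x.2.2) ->
  exists2 m, 0 < m & forall x, Kset T sg kp x -> m <= Fg x.1.1 x.1.2 x.2.1 x.2.2.
Proof.
move=> ne pos.
have cf : {within Kset T sg kp, continuous (fun x : Q => Fg x.1.1 x.1.2 x.2.1 x.2.2)}.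
  apply: continuous_subspaceT => x. rewrite /Fg /Dre /Dim. apply: toCT. cont.
have [c cK cmin] := compact_EVT_min ne (Kcompact T sg kp) cf.
exists (Fg c.1.1 c.1.2 c.2.1 c.2.2).
  by apply: pos; rewrite inE in cK.
by move=> x Kx; apply: cmin; rewrite inE.
Qed.
End Gen.
Arguments cre {R}. Arguments cim {R}. Arguments Dre {R}. Arguments Dim {R}. Arguments Fg {R}. Arguments g3 {R}. Arguments g4 {R}. Arguments g5 {R}. Arguments nrm {R}. Arguments Kset {R}.

Lemma Kset_in (R : realType) (T sg kp a b p q : R) :
  -1 <= a <= 1 -> -1 <= b <= 1 -> -1 <= p <= 1 -> -1 <= q <= 1 ->
  0 <= a -> 0 <= p -> 0 <= g3 T a b -> 0 <= g4 T a b -> 0 <= g5 sg kp a b p q ->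
  nrm a b p q <= 1 -> 1 <= nrm a b p q -> Kset T sg kp ((a, b), (p, q)).
Proof.
move=> ha hb hp hq *; rewrite /Kset /=.
by do !split => //; rewrite /= in_itv /=.
Qed.

Lemma Kset_out (R : realType) (T sg kp a b p q : R) : Kset T sg kp ((a, b), (p, q)) ->
  [/\ 0 <= a, 0 <= p, 0 <= g3 T a b, 0 <= g4 T a b & 0 <= g5 sg kp a b p q] /\ nrm a b p q = 1.
Proof.
rewrite /Kset /= => -[[[[[[[_ h1] h2] h3] h4] h5] h6] h7].
split=> //. by apply/eqP; rewrite eq_le h6 h7.
Qed.

Notation RR := Rdefinitions.R.
Definition g3S (T a b : RR) : RR := g3 T a b.
Definition g4S (T a b : RR) : RR := g4 T a b.
Definition g5S (sg kp a b p q : RR) : RR := g5 sg kp a b p q.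
Definition nrmS (a b p q : RR) : RR := nrm a b p q.
Definition FS (a b p q : RR) : RR := Fg a b p q.
Definition KS (T sg kp a b p q : RR) : Prop := Kset T sg kp ((a, b), (p, q)).

Lemma KS_intro (T sg kp a b p q : RR) :
  Rle (Ropp R1) a -> Rle a R1 -> Rle (Ropp R1) b -> Rle b R1 ->
  Rle (Ropp R1) p -> Rle p R1 -> Rle (Ropp R1) q -> Rle q R1 ->
  Rle R0 a -> Rle R0 p -> Rle R0 (g3S T a b) -> Rle R0 (g4S T a b) ->
  Rle R0 (g5S sg kp a b p q) -> nrmS a b p q = R1 -> KS T sg kp a b p q.
Proof.
move=> /RleP h1 /RleP h2 /RleP h3 /RleP h4 /RleP h5 /RleP h6 /RleP h7 /RleP h8.
move=> /RleP h9 /RleP h10 /RleP h11 /RleP h12 /RleP h13 hn.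
apply: Kset_in => //; try (by apply/andP; split).
- by rewrite /nrmS in hn; rewrite hn.
- by rewrite /nrmS in hn; rewrite hn.
Qed.

Lemma KS_elim (T sg kp a b p q : RR) : KS T sg kp a b p q ->
  Rle R0 a /\ Rle R0 p /\ Rle R0 (g3S T a b) /\ Rle R0 (g4S T a b) /\
  Rle R0 (g5S sg kp a b p q) /\ nrmS a b p q = R1.
Proof.
move=> /Kset_out [[h1 h2 h3 h4 h5] h6].
by do !split => //; apply/RleP.
Qed.

Lemma evt_S (T sg kp : RR) :
  (exists a b p q : RR, KS T sg kp a b p q) ->
  (forall a b p q : RR, KS T sg kp a b p q -> Rlt R0 (FS a b p q)) ->
  exists m : RR, Rlt R0 m /\ forall a b p q, KS T sg kp a b p q -> Rle m (FS a b p q).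
Proof.
move=> [a [b [p [q h]]]] pos.
have ne : Kset T sg kp !=set0 by exists ((a, b), (p, q)).
have ps : forall x, Kset T sg kp x -> 0 < Fg x.1.1 x.1.2 x.2.1 x.2.2.
  by move=> [[a' b'] [p' q']] /pos /RltP.
have [m m0 hm] := @evt_main _ T sg kp ne ps.
exists m; split; first exact/RltP.
move=> a' b' p' q' hK. apply/RleP. exact: (hm ((a', b'), (p', q'))).
Qed.
End MC.

From Stdlib Require Import Lra Psatz.
Open Scope R_scope.

Lemma case_ypos (T sg kp a b x y : R) : 0 < T -> 0 < sg -> 0 < kp -> T*kp < sg ->
  0 <= a -> 0 < a*a + b*b ->
  0 <= T*(a*a-b*b) - (a*b+a*b) -> 0 <= T*(a*a-b*b) + (a*b+a*b) ->
  0 <= a*x - b*y ->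
  0 <= sg * ((a*x - b*y)*(a*x - b*y) - (a*y + b*x)*(a*y + b*x) - a*a + b*b)
       + kp * Rabs ((a*x - b*y)*(a*y + b*x) - a*b + ((a*x - b*y)*(a*y + b*x) - a*b)) ->
  0 < y -> y*y = 3*x*x + 2*x + 3 -> 2*x*x*x + 2*x*x + 2*x + 1 = 0 -> False.
Proof.
intros hT hsg hkp hm ha hab g3 g4 hB g5 hy hy2 hx3.
set (s1 := a*a - b*b). set (s2 := a*b + a*b).
assert (hs1 : 0 < s1).
{ assert (0 <= s1) by (unfold s1 in *; nra).
  destruct (Req_dec s1 0) as [e|e]; [|lra].
  exfalso. assert (s2 = 0) by (unfold s1, s2 in *; nra).
  unfold s1, s2 in *. nra. }
assert (ha' : 0 < a) by (unfold s1 in *; nra).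
assert (hx : -1 < x < 0) by nra.
assert (hax : a*x < 0) by nra.
assert (hby : b*y < 0) by lra.
assert (hb : b < 0) by nra.
set (u := 2*x*x + 2*x + 4). set (V := 2*x*y).
assert (hu : 0 < u) by (unfold u; nra).
assert (hV : V < 0) by (unfold V; nra).
assert (hs2 : s2 < 0) by (unfold s2; nra).
assert (hX : x*x - y*y - 1 = - u) by (unfold u; lra).
assert (e1 : (a*x - b*y)*(a*x - b*y) - (a*y + b*x)*(a*y + b*x) - a*a + b*b = - (s1*u + s2*V)).
{ rewrite <- (Ropp_involutive u), <- hX. unfold s1, s2, V. ring. }
assert (e2 : (a*x - b*y)*(a*y + b*x) - a*b + ((a*x - b*y)*(a*y + b*x) - a*b) = s1*V - s2*u).
{ rewrite <- (Ropp_involutive u), <- hX. unfold s1, s2, V. ring. }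
rewrite e1, e2 in g5.
assert (hsV : 0 < s2 * V) by nra.
assert (hP : 0 < s1*u + s2*V) by nra.
assert (hl2 : 0 <= s1*V - s2*u).
{ assert (h1 : (-x)*y*(a*a) <= a*(-b)*(y*y)).
  { assert (a*(-x) <= (-b)*y) by lra. assert (0 <= a*y) by nra. nra. }
  assert (h2 : (-x)*y*s1 <= (-x)*y*(a*a)) by (unfold s1; nra).
  assert (h3 : a*(-b)*(y*y) <= a*(-b)*u).
  { assert (y*y <= u) by (unfold u; nra). assert (0 <= a*(-b)) by nra. nra. }
  unfold s2, V. nra. }
rewrite Rabs_right in g5 by lra.
assert (h4 : (s1*V - s2*u)*s1 <= (-s2)*(s1*u + s2*V)).
{ assert (0 <= - V * (s1*s1 + s2*s2)) by nra. nra. }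
assert (h5 : -s2 <= T*s1) by (unfold s1, s2 in *; lra).
assert (h6 : s1*V - s2*u <= T*(s1*u + s2*V)).
{ assert ((s1*V - s2*u)*s1 <= T*s1*(s1*u + s2*V)) by nra. 
  apply (Rmult_le_reg_r s1); [lra|]. nra. }
nra.
Qed.

Lemma s1pos (T a b : R) : 0 < T -> 0 < a*a + b*b ->
  0 <= T*(a*a-b*b) - (a*b+a*b) -> 0 <= T*(a*a-b*b) + (a*b+a*b) -> 0 < a*a - b*b.
Proof.
intros hT hab g3 g4.
assert (0 <= a*a - b*b) by nra.
destruct (Req_dec (a*a - b*b) 0) as [e|e]; [|lra].
exfalso. assert (a*b + a*b = 0) by nra. nra.
Qed.

Definition Pre x y := x*x*x - 3*x*(y*y) + x*x - y*y + 3*x - 1.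
Definition Pim x y := 3*x*x*y - y*y*y + 2*x*y + 3*y.

Lemma alg_w (T sg kp a b x y : R) : 0 < T -> 0 < sg -> 0 < kp -> T*kp < sg ->
  0 <= a -> 0 < a*a + b*b ->
  0 <= T*(a*a-b*b) - (a*b+a*b) -> 0 <= T*(a*a-b*b) + (a*b+a*b) ->
  0 <= a*x - b*y ->
  0 <= sg * ((a*x - b*y)*(a*x - b*y) - (a*y + b*x)*(a*y + b*x) - a*a + b*b)
       + kp * Rabs ((a*x - b*y)*(a*y + b*x) - a*b + ((a*x - b*y)*(a*y + b*x) - a*b)) ->
  Pre x y = 0 -> Pim x y = 0 -> False.
Proof.
intros hT hsg hkp hm ha hab g3 g4 hB g5 hre him.
unfold Pre, Pim in *.
destruct (Rtotal_order y 0) as [hy|[hy|hy]].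
- assert (hy2 : y*y = 3*x*x + 2*x + 3).
  { assert (y * (3*x*x - y*y + 2*x + 3) = 0) by (rewrite <- him; ring).
    apply Rmult_integral in H. destruct H; lra. }
  assert (hx3 : 2*x*x*x + 2*x*x + 2*x + 1 = 0).
  { rewrite hy2 in hre. lra. }
  apply (case_ypos T sg kp a (-b) x (-y)); try lra; try nra.
  replace ((a*x - -b * -y)*(a*x - -b * -y) - (a * -y + -b*x)*(a * -y + -b*x) - a*a + -b * -b)
    with ((a*x - b*y)*(a*x - b*y) - (a*y + b*x)*(a*y + b*x) - a*a + b*b) by ring.
  replace ((a*x - -b * -y)*(a * -y + -b*x) - a * -b + ((a*x - -b * -y)*(a * -y + -b*x) - a * -b))
    with (- ((a*x - b*y)*(a*y + b*x) - a*b + ((a*x - b*y)*(a*y + b*x) - a*b))) by ring.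
  rewrite Rabs_Ropp. exact g5.
- subst y.
  assert (hs1 := s1pos T a b hT hab g3 g4).
  assert (hc : x*x*x + x*x + 3*x - 1 = 0) by (rewrite <- hre; ring).
  assert (hx1 : x < 1).
  { destruct (Rlt_or_le x 1) as [h|h]; [exact h|]. exfalso. nra. }
  assert (hx2 : -1 < x).
  { destruct (Rlt_or_le (-1) x) as [h|h]; [exact h|]. exfalso.
    assert (x*x*(x+1) <= 0) by (assert (0 <= x*x) by nra; nra). nra. }
  assert (hx : x*x < 1) by nra.
  replace ((a*x - b*0)*(a*x - b*0) - (a*0 + b*x)*(a*0 + b*x) - a*a + b*b)
    with (- ((a*a - b*b) * (1 - x*x))) in g5 by ring.
  replace ((a*x - b*0)*(a*0 + b*x) - a*b + ((a*x - b*0)*(a*0 + b*x) - a*b))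
    with (- ((a*b + a*b) * (1 - x*x))) in g5 by ring.
  rewrite Rabs_Ropp, Rabs_mult, (Rabs_right (1 - x*x)) in g5 by lra.
  assert (Rabs (a*b+a*b) <= T * (a*a - b*b)) by (apply Rabs_le; lra).
  assert (kp * (Rabs (a*b+a*b) * (1 - x*x)) <= kp * (T * (a*a-b*b) * (1 - x*x))).
  { apply Rmult_le_compat_l; [lra|]. apply Rmult_le_compat_r; lra. }
  assert (0 < (a*a-b*b)*(1-x*x)) by nra.
  nra.
- assert (hy2 : y*y = 3*x*x + 2*x + 3).
  { assert (y * (3*x*x - y*y + 2*x + 3) = 0) by (rewrite <- him; ring).
    apply Rmult_integral in H. destruct H; lra. }
  assert (hx3 : 2*x*x*x + 2*x*x + 2*x + 1 = 0).
  { rewrite hy2 in hre. lra. }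
  exact (case_ypos T sg kp a b x y hT hsg hkp hm ha hab g3 g4 hB g5 hy hy2 hx3).
Qed.

Definition creS (x1 y1 x2 y2 : R) := x1 * x2 - y1 * y2.
Definition cimS (x1 y1 x2 y2 : R) := x1 * y2 + y1 * x2.
Definition DreS (a b p q : R) :=
  creS (creS p q p q) (cimS p q p q) p q + creS a b (creS p q p q) (cimS p q p q)
  + creS ((1+1+1) * creS a b a b) ((1+1+1) * cimS a b a b) p q
  - creS (creS a b a b) (cimS a b a b) a b.
Definition DimS (a b p q : R) :=
  cimS (creS p q p q) (cimS p q p q) p q + cimS a b (creS p q p q) (cimS p q p q)
  + cimS ((1+1+1) * creS a b a b) ((1+1+1) * cimS a b a b) p q
  - cimS (creS a b a b) (cimS a b a b) a b.
Definition FSs (a b p q : R) := DreS a b p q * DreS a b p q + DimS a b p q * DimS a b p q.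

Lemma F_ident a b x y : FSs a b (a*x - b*y) (a*y + b*x) = (a*a+b*b)^3 * (Pre x y * Pre x y + Pim x y * Pim x y).
Proof. unfold FSs, DreS, DimS, creS, cimS, Pre, Pim. ring. Qed.

Lemma F_A0 p q : FSs 0 0 p q = (p*p+q*q)^3.
Proof. unfold FSs, DreS, DimS, creS, cimS. ring. Qed.

Lemma F_pos (T sg kp a b p q : R) : 0 < T -> 0 < sg -> 0 < kp -> T*kp < sg ->
  0 <= a -> 0 <= p ->
  0 <= T*(a*a-b*b) - (a*b+a*b) -> 0 <= T*(a*a-b*b) + (a*b+a*b) ->
  0 <= sg * (p*p - q*q - a*a + b*b) + kp * Rabs (p*q - a*b + (p*q - a*b)) ->
  a*a + b*b + p*p + q*q = 1 -> 0 < FSs a b p q.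
Proof.
intros hT hsg hkp hm ha hp g3 g4 g5 hn.
destruct (Req_dec (a*a + b*b) 0) as [e|e].
- assert (a = 0) by nra. assert (b = 0) by nra. subst a b.
  rewrite F_A0. replace (p*p+q*q) with 1 by lra. lra.
- assert (hab : 0 < a*a + b*b) by nra.
  set (x := (p*a + q*b) / (a*a+b*b)). set (y := (q*a - p*b) / (a*a+b*b)).
  assert (ep : p = a*x - b*y) by (unfold x, y; field; lra).
  assert (eq : q = a*y + b*x) by (unfold x, y; field; lra).
  clearbody x y. rewrite ep, eq in *. rewrite F_ident.
  destruct (Rle_or_lt (Pre x y * Pre x y + Pim x y * Pim x y) 0) as [h|h].
  + exfalso. apply (alg_w T sg kp a b x y); try assumption; nra.
  + apply Rmult_lt_0_compat; [apply pow_lt; exact hab | exact h].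
Qed.

Lemma FS_eq a b p q : MC.FS a b p q = FSs a b p q.
Proof. reflexivity. Qed.

Lemma F_hom t a b p q : FSs (t*a) (t*b) (t*p) (t*q) = t^6 * FSs a b p q.
Proof. unfold FSs, DreS, DimS, creS, cimS. ring. Qed.

Lemma F_nonneg a b p q : 0 <= FSs a b p q.
Proof. unfold FSs. nra. Qed.

Lemma core (T sg kp : R) : 0 < T -> 0 < sg -> 0 < kp -> T*kp < sg ->
  exists m, 0 < m /\ forall a b p q, 0 <= a -> 0 <= p ->
  0 <= T*(a*a-b*b) - (a*b+a*b) -> 0 <= T*(a*a-b*b) + (a*b+a*b) ->
  0 <= sg * (p*p - q*q - a*a + b*b) + kp * Rabs (p*q - a*b + (p*q - a*b)) ->
  m * (a*a + b*b + p*p + q*q)^3 <= FSs a b p q.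
Proof.
intros hT hsg hkp hm.
assert (Hne : exists a b p q : R, MC.KS T sg kp a b p q).
{ set (h := sqrt (/2)).
  assert (hh : h*h = /2) by (apply sqrt_sqrt; lra).
  assert (hh0 : 0 <= h) by apply sqrt_pos.
  assert (h1 : h <= 1) by nra.
  exists h, 0, h, 0. apply MC.KS_intro; change (Ropp R1) with (-1); change R1 with 1; change R0 with 0; try lra.
  + change (0 <= T*(h*h-0*0) - (h*0+h*0)). rewrite hh. nra.
  + change (0 <= T*(h*h-0*0) + (h*0+h*0)). rewrite hh. nra.
  + change (0 <= sg * (h*h - 0*0 - h*h + 0*0) + kp * Rabs (h*0 - h*0 + (h*0 - h*0))).
    replace (h*0 - h*0 + (h*0 - h*0)) with 0 by ring. rewrite Rabs_R0. nra.
  + change (h*h + 0*0 + h*h + 0*0 = 1). lra. }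
assert (Hpos : forall a b p q : R, MC.KS T sg kp a b p q -> 0 < MC.FS a b p q).
{ intros a b p q hK. destruct (MC.KS_elim _ _ _ _ _ _ _ hK) as [h1 [h2 [h3 [h4 [h5 h6]]]]].
  rewrite FS_eq. apply (F_pos T sg kp a b p q); auto. }
destruct (MC.evt_S T sg kp Hne Hpos) as [m [hm0 hmin]].
{ exists m. split; [exact hm0|].
  intros a b p q ha hp g3 g4 g5.
  set (n := a*a + b*b + p*p + q*q).
  destruct (Req_dec n 0) as [e|e].
  + rewrite e. replace (0^3) with 0 by ring. rewrite Rmult_0_r. apply F_nonneg.
  + assert (hn : 0 < n) by (unfold n in *; nra).
    set (t := / sqrt n).
    assert (hs : 0 < sqrt n) by (apply sqrt_lt_R0; exact hn).
    assert (ht : 0 < t) by (apply Rinv_0_lt_compat; exact hs).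
    assert (htt : t*t*n = 1).
    { unfold t. rewrite <- (sqrt_sqrt n) at 3 by lra. field. lra. }
    assert (hK : MC.KS T sg kp (t*a) (t*b) (t*p) (t*q)).
    { assert (ht2 : 0 < t*t) by nra.
      assert (ha2 : (t*a)*(t*a) <= 1) by (unfold n in *; nra).
      assert (hb2 : (t*b)*(t*b) <= 1) by (unfold n in *; nra).
      assert (hp2 : (t*p)*(t*p) <= 1) by (unfold n in *; nra).
      assert (hq2 : (t*q)*(t*q) <= 1) by (unfold n in *; nra).
      apply MC.KS_intro; change (Ropp R1) with (-1); change R1 with 1; change R0 with 0; try nra.
      + change (0 <= T*((t*a)*(t*a)-(t*b)*(t*b)) - ((t*a)*(t*b)+(t*a)*(t*b))).
        replace (T*((t*a)*(t*a)-(t*b)*(t*b)) - ((t*a)*(t*b)+(t*a)*(t*b))) with ((t*t) * (T*(a*a-b*b) - (a*b+a*b))) by ring. nra.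
      + change (0 <= T*((t*a)*(t*a)-(t*b)*(t*b)) + ((t*a)*(t*b)+(t*a)*(t*b))).
        replace (T*((t*a)*(t*a)-(t*b)*(t*b)) + ((t*a)*(t*b)+(t*a)*(t*b))) with ((t*t) * (T*(a*a-b*b) + (a*b+a*b))) by ring. nra.
      + change (0 <= sg * ((t*p)*(t*p) - (t*q)*(t*q) - (t*a)*(t*a) + (t*b)*(t*b)) + kp * Rabs ((t*p)*(t*q) - (t*a)*(t*b) + ((t*p)*(t*q) - (t*a)*(t*b)))).
        replace ((t*p)*(t*q) - (t*a)*(t*b) + ((t*p)*(t*q) - (t*a)*(t*b))) with ((t*t) * (p*q - a*b + (p*q - a*b))) by ring.
        rewrite Rabs_mult, (Rabs_right (t*t)) by lra.
        replace (sg * ((t*p)*(t*p) - (t*q)*(t*q) - (t*a)*(t*a) + (t*b)*(t*b)) + kp * (t*t * Rabs (p*q - a*b + (p*q - a*b))))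
          with ((t*t) * (sg * (p*p - q*q - a*a + b*b) + kp * Rabs (p*q - a*b + (p*q - a*b)))) by ring. nra.
      + change ((t*a)*(t*a) + (t*b)*(t*b) + (t*p)*(t*p) + (t*q)*(t*q) = 1).
        rewrite <- htt. unfold n. ring. }
    assert (hF := hmin _ _ _ _ hK). rewrite FS_eq, F_hom in hF.
    assert (e6 : t^6 * n^3 = 1) by (rewrite <- (pow1 3), <- htt; ring).
    assert (0 < n^3) by (apply pow_lt; exact hn).
    apply (Rmult_le_reg_l (t^6)); [apply pow_lt; exact ht|].
    replace (t^6 * (m * n^3)) with m by (rewrite <- Rmult_assoc, (Rmult_comm (t^6) m), Rmult_assoc, e6; ring).
    exact hF. }
Qed.

Lemma Dpoly_eq a b p q : Dpoly (a,b) (p,q) = (DreS a b p q, DimS a b p q).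
Proof.
unfold Dpoly, DreS, DimS, creS, cimS, Cminus, Cplus, Cmult, Copp, RtoC. simpl.
f_equal; ring.
Qed.

Lemma abs_trig (t : R) : Rabs t <= PI -> cos (Rabs t) = cos t /\ sin (Rabs t) = Rabs (sin t).
Proof.
intros h. destruct (Rle_or_lt 0 t) as [h0|h0].
- rewrite (Rabs_right t) in * by lra. split; [reflexivity|].
  rewrite Rabs_right; [reflexivity|]. apply Rle_ge, sin_ge_0; lra.
- rewrite (Rabs_left t) in * by lra. split; [apply cos_neg|].
  rewrite sin_neg. rewrite (Rabs_left1 (sin t)); [reflexivity|].
  assert (0 <= sin (-t)) by (apply sin_ge_0; lra). rewrite sin_neg in H. lra.
Qed.

Lemma Sigma_prop (eps : R) (z : C) : 0 < eps < PI/2 -> in_Sigma eps z ->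
  0 <= sin eps * fst z + cos eps * Rabs (snd z).
Proof.
intros he [hz [t [ht [[r [hr ez]] hta]]]].
subst z. simpl.
assert (ha : Rabs t <= PI) by (apply Rabs_le; lra).
destruct (abs_trig t ha) as [hc hs].
rewrite Rabs_mult, (Rabs_right r) by lra.
replace (sin eps * (r * cos t) + cos eps * (r * Rabs (sin t))) with (r * sin (eps + Rabs t)).
- apply Rmult_le_pos; [lra|]. apply sin_ge_0; [pose proof (Rabs_pos t); lra | lra].
- rewrite sin_plus, hc, hs. ring.
Qed.

Lemma tSigma_prop (eta : R) (z : C) : 0 < eta < PI/4 -> in_tSigma eta z ->
  Rabs (fst z * snd z + snd z * fst z) * cos (2*eta) <= sin (2*eta) * (fst z * fst z - snd z * snd z) /\
  cos (2*eta) * (fst z * fst z + snd z * snd z) <= fst z * fst z - snd z * snd z.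
Proof.
intros he [hz [t [ht [[r [hr ez]] hta]]]].
subst z. simpl.
assert (E1 : r * cos t * (r * cos t) - r * sin t * (r * sin t) = r*r * cos (2*t)) by (rewrite cos_2a; ring).
assert (E2 : r * cos t * (r * sin t) + r * sin t * (r * cos t) = r*r * sin (2*t)) by (rewrite sin_2a; ring).
assert (E3 : r * cos t * (r * cos t) + r * sin t * (r * sin t) = r*r) by (pose proof (sin2_cos2 t); unfold Rsqr in *; nra).
rewrite E1, E2, E3.
assert (Hphi : exists phi, Rabs phi <= 2*eta /\ cos phi = cos (2*t) /\ sin phi = sin (2*t)).
{ destruct hta as [h|h].
  - exists (2*t). split; [|split; reflexivity].
    rewrite Rabs_mult, (Rabs_right 2) by lra. lra.
  - destruct (Rle_or_lt 0 t) as [h0|h0].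
    + rewrite Rabs_right in h by lra.
      exists (2*t - 2*PI). split.
      * apply Rabs_le. lra.
      * rewrite cos_minus, sin_minus, cos_2PI, sin_2PI. split; ring.
    + rewrite Rabs_left in h by lra.
      exists (2*t + 2*PI). split.
      * apply Rabs_le. lra.
      * rewrite cos_plus, sin_plus, cos_2PI, sin_2PI. split; ring. }
destruct Hphi as [phi [hp [hc hs]]].
rewrite <- hc, <- hs.
assert (PI4 : PI/4 < PI) by (pose proof PI_RGT_0; lra).
assert (ha : Rabs phi <= PI) by lra.
destruct (abs_trig phi ha) as [hc' hs'].
rewrite <- hc', Rabs_mult, (Rabs_right (r*r)) by nra. rewrite <- hs'.
assert (hpos := Rabs_pos phi).
split.
- assert (0 <= sin (2*eta - Rabs phi)) by (apply sin_ge_0; lra).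
  rewrite sin_minus in H. nra.
- assert (cos (2*eta) <= cos (Rabs phi)).
  { destruct (Req_dec (Rabs phi) (2*eta)) as [e|e]; [rewrite e; lra|].
    left. apply cos_decreasing_1; lra. }
  nra.
Qed.

Lemma sum_cone (f : nat -> C) (w : nat -> R) (T' c2 : R) (n m : nat) : 0 <= c2 -> (n <= m)%nat ->
  (forall j, (n <= j <= m)%nat -> Rabs (snd (f j)) * c2 <= T' * fst (f j) /\ c2 * w j <= fst (f j)) ->
  Rabs (snd (sum_n_m f n m)) * c2 <= T' * fst (sum_n_m f n m) /\ c2 * sum_n_m w n m <= fst (sum_n_m f n m).
Proof.
intros hc. induction m as [|m IH]; intros hnm H.
- assert (n = 0%nat) by lia. subst n. rewrite !sum_n_n. apply H. lia.
- destruct (Nat.eq_dec n (S m)) as [e|e].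
  + subst n. rewrite !sum_n_n. apply H. lia.
  + rewrite !sum_n_Sm by lia.
    destruct (IH ltac:(lia) ltac:(intros j hj; apply H; lia)) as [i1 i2].
    destruct (H (S m) ltac:(lia)) as [j1 j2].
    change (plus (sum_n_m w n m) (w (S m))) with (sum_n_m w n m + w (S m)).
    destruct (sum_n_m f n m) as [s1 s2]. destruct (f (S m)) as [u1 u2]. simpl in *.
    split.
    * assert (Rabs (s2 + u2) <= Rabs s2 + Rabs u2) by apply Rabs_triang. nra.
    * lra.
Qed.

Lemma lam_bound (a b p q : R) :
  (p*p - q*q - a*a + b*b)^2 + (p*q - a*b + (p*q - a*b))^2 <= (a*a + b*b + p*p + q*q)^2.
Proof.
assert (cs : ((p*p - q*q)*(a*a - b*b) + (p*q + p*q)*(a*b + a*b))^2 <= ((p*p+q*q)*(a*a+b*b))^2).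
{ replace (((p*p+q*q)*(a*a+b*b))^2) with (((p*p - q*q)*(a*a - b*b) + (p*q + p*q)*(a*b + a*b))^2
     + ((p*p - q*q)*(a*b + a*b) - (p*q + p*q)*(a*a - b*b))^2) by ring.
  assert (0 <= ((p*p - q*q)*(a*b + a*b) - (p*q + p*q)*(a*a - b*b))^2) by (apply pow2_ge_0). lra. }
assert (hpq : 0 <= p*p+q*q) by nra. assert (hab : 0 <= a*a+b*b) by nra.
assert (h0 : 0 <= (p*p+q*q)*(a*a+b*b)) by nra.
assert (h : - ((p*p - q*q)*(a*a - b*b) + (p*q + p*q)*(a*b + a*b)) <= (p*p+q*q)*(a*a+b*b)).
{ destruct (Rle_or_lt (- ((p*p - q*q)*(a*a - b*b) + (p*q + p*q)*(a*b + a*b))) ((p*p+q*q)*(a*a+b*b))) as [h|h]; [exact h|].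
  exfalso. nra. }
replace ((p*p - q*q - a*a + b*b)^2 + (p*q - a*b + (p*q - a*b))^2)
  with ((p*p+q*q)^2 + (a*a+b*b)^2 - 2*((p*p - q*q)*(a*a - b*b) + (p*q + p*q)*(a*b + a*b))) by ring.
replace ((a*a + b*b + p*p + q*q)^2) with ((p*p+q*q)^2 + (a*a+b*b)^2 + 2*((p*p+q*q)*(a*a+b*b))) by ring.
lra.
Qed.

Theorem lemma6p3 (N : nat) (eps eta : R) :
  (2 <= N)%nat ->
  0 < eps < PI / 2 ->
  0 < eta < Rmin (PI / 4) (eps / 2) ->
  exists c : R, 0 < c /\
    forall (lam : C) (xi : nat -> C) (A B : C),
      in_Sigma eps lam ->
      (forall j, (1 <= j <= N - 1)%nat -> in_tSigma eta (xi j)) ->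
      is_psqrt A (sum_n_m (fun j => (xi j * xi j)%C) 1 (N - 1)) ->
      is_psqrt B (lam + A * A)%C ->
      c * (sqrt (Cmod lam)
           + sqrt (sum_n_m (fun j => (Cmod (xi j))^2) 1 (N - 1)))^3
        <= Cmod (Dpoly A B).
Proof.
intros hN he hh.
assert (hPI := PI_RGT_0).
assert (hh1 : eta < PI/4) by (pose proof (Rmin_l (PI/4) (eps/2)); lra).
assert (hh2 : eta < eps/2) by (pose proof (Rmin_r (PI/4) (eps/2)); lra).
set (c2 := cos (2*eta)). set (s2e := sin (2*eta)).
set (sg := sin eps). set (kp := cos eps).
assert (hc2 : 0 < c2) by (apply cos_gt_0; lra).
assert (hs2e : 0 < s2e) by (apply sin_gt_0; lra).
assert (hsg : 0 < sg) by (apply sin_gt_0; lra).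
assert (hkp : 0 < kp) by (apply cos_gt_0; lra).
assert (hdiff : 0 < sg * c2 - kp * s2e).
{ unfold sg, c2, kp, s2e. rewrite <- sin_minus. apply sin_gt_0; lra. }
set (T := s2e / c2).
assert (hT : 0 < T) by (unfold T; apply Rdiv_lt_0_compat; lra).
assert (hTk : T * kp < sg).
{ unfold T. apply (Rmult_lt_reg_r c2); [lra|]. field_simplify; [|lra]. lra. }
destruct (core T sg kp hT hsg hkp hTk) as [m [hm hcore]].
set (K := 1 + / sqrt c2).
assert (hsc2 : 0 < sqrt c2) by (apply sqrt_lt_R0; lra).
assert (hK : 1 <= K) by (unfold K; assert (0 < / sqrt c2) by (apply Rinv_0_lt_compat; lra); lra).
assert (hK0 : 0 < K) by lra.
assert (hK3 : 0 < K^3) by (apply pow_lt; lra).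
assert (hsm : 0 < sqrt m) by (apply sqrt_lt_R0; lra).
exists (sqrt m / K^3). split; [apply Rdiv_lt_0_compat; lra|].
intros lam xi A B hlam hxi hA hB.
set (W := sum_n_m (fun j => (Cmod (xi j))^2) 1 (N - 1)).
set (S := sum_n_m (fun j => (xi j * xi j)%C) 1 (N - 1)) in hA.
destruct (sum_cone (fun j => (xi j * xi j)%C) (fun j => (Cmod (xi j))^2) s2e c2 1 (N-1)) as [hS1 hS2].
{ lra. }
{ lia. }
{ intros j hj. destruct (tSigma_prop eta (xi j) ltac:(lra) (hxi j hj)) as [t1 t2].
  destruct (xi j) as [u v]. unfold Cmod. cbn [fst snd] in *.
  rewrite pow2_sqrt by nra. unfold Cmult; cbn [fst snd]. fold c2 s2e in t1, t2. split.
  - unfold c2, s2e in *. nra.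
  - replace (u^2 + v^2) with (u*u+v*v) by ring. unfold c2, s2e in *. nra. }
fold S W in hS1, hS2.
destruct A as [a b], B as [p q], lam as [l1 l2].
destruct hA as [hA ha]. destruct hB as [hB hp]. simpl in ha, hp.
rewrite <- hA in hS1, hS2. simpl in hS1, hS2.
unfold Cplus, Cmult in hB. simpl in hB. injection hB as hB1 hB2.
assert (hsig := Sigma_prop eps (l1, l2) he hlam). simpl in hsig. fold sg kp in hsig.
assert (g3 : 0 <= T*(a*a-b*b) - (a*b+a*b)).
{ apply (Rmult_le_reg_r c2); [lra|]. rewrite Rmult_0_l.
  replace ((T*(a*a-b*b) - (a*b+a*b)) * c2) with (s2e*(a*a-b*b) - c2*(a*b+a*b)) by (unfold T; field; lra).
  assert (a*b+a*b <= Rabs (a*b + b*a)) by (replace (b*a) with (a*b) by ring; apply Rle_abs). nra. }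
assert (g4 : 0 <= T*(a*a-b*b) + (a*b+a*b)).
{ apply (Rmult_le_reg_r c2); [lra|]. rewrite Rmult_0_l.
  replace ((T*(a*a-b*b) + (a*b+a*b)) * c2) with (s2e*(a*a-b*b) + c2*(a*b+a*b)) by (unfold T; field; lra).
  assert (-(a*b+a*b) <= Rabs (a*b + b*a)) by (replace (b*a) with (a*b) by ring; rewrite <- Rabs_Ropp; apply Rle_abs). nra. }
assert (g5 : 0 <= sg * (p*p - q*q - a*a + b*b) + kp * Rabs (p*q - a*b + (p*q - a*b))).
{ replace (p*p - q*q - a*a + b*b) with l1 by lra.
  replace (p*q - a*b + (p*q - a*b)) with l2 by lra. exact hsig. }
assert (hF := hcore a b p q ltac:(lra) ltac:(lra) g3 g4 g5).
set (n := a*a + b*b + p*p + q*q) in hF.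
assert (hn : 0 <= n) by (unfold n; nra).
assert (hl : Cmod (l1, l2) <= n).
{ unfold Cmod. simpl. rewrite <- (sqrt_pow2 n) by lra. apply sqrt_le_1_alt.
  replace l1 with (p*p - q*q - a*a + b*b) by lra.
  replace l2 with (p*q - a*b + (p*q - a*b)) by lra. apply lam_bound. }
assert (hsl : sqrt (Cmod (l1, l2)) <= sqrt n) by (apply sqrt_le_1_alt; exact hl).
assert (hW : W <= n / c2).
{ apply (Rmult_le_reg_r c2); [lra|]. unfold Rdiv. rewrite Rmult_assoc, Rinv_l, Rmult_1_r by lra.
  unfold n. nra. }
assert (hsW : sqrt W <= sqrt n * / sqrt c2).
{ rewrite <- sqrt_inv, <- sqrt_mult_alt by lra. apply sqrt_le_1_alt. exact hW. }
set (X := sqrt (Cmod (l1, l2)) + sqrt W).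
assert (hX0 : 0 <= X) by (unfold X; pose proof (sqrt_pos (Cmod (l1,l2))); pose proof (sqrt_pos W); lra).
assert (hsn : 0 <= sqrt n) by apply sqrt_pos.
assert (hXK : X <= sqrt n * K) by (unfold X, K; nra).
rewrite Dpoly_eq. unfold Cmod. cbn [fst snd].
set (D := DreS a b p q ^ 2 + DimS a b p q ^ 2).
assert (hD : D = FSs a b p q) by (unfold D, FSs; ring).
assert (hD0 : 0 <= D) by (unfold D; nra).
assert (hsD : sqrt D * sqrt D = D) by (apply sqrt_sqrt; lra).
assert (hsD0 : 0 <= sqrt D) by apply sqrt_pos.
assert (hX3 : X^3 <= (sqrt n * K)^3) by (apply pow_incr; lra).
assert (hsn2 : sqrt n * sqrt n = n) by (apply sqrt_sqrt; lra).
assert (hsm2 : sqrt m * sqrt m = m) by (apply sqrt_sqrt; lra).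
assert (hlhs : sqrt m / K^3 * X^3 <= sqrt m * (sqrt n)^3).
{ apply (Rmult_le_reg_r (K^3)); [lra|].
  replace (sqrt m / K^3 * X^3 * K^3) with (sqrt m * X^3) by (field; lra).
  replace (sqrt m * (sqrt n)^3 * K^3) with (sqrt m * (sqrt n * K)^3) by ring.
  apply Rmult_le_compat_l; lra. }
assert (hrhs : sqrt m * (sqrt n)^3 <= sqrt D).
{ assert (h0 : 0 <= sqrt m * (sqrt n)^3) by (apply Rmult_le_pos; [lra| apply pow_le; lra]).
  assert (hsq : (sqrt m * (sqrt n)^3) * (sqrt m * (sqrt n)^3) <= sqrt D * sqrt D).
  { rewrite hsD, hD.
    replace ((sqrt m * (sqrt n)^3) * (sqrt m * (sqrt n)^3)) with ((sqrt m * sqrt m) * ((sqrt n * sqrt n) ^3)) by ring.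
    rewrite hsm2, hsn2. exact hF. }
  nra. }
lra.
Qed.
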